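(* Let $p$ be a prime and $q=p^2$. Let $1\le s\le q-1$ and let $L\subseteq\{0,1,\ldots,q-1\}$ be an interval in the modulo $q$ sense of size $s$. If $\mathcal{F}\subseteq2^{[n]}$ is a $q$-modular $L$-avoiding $L$-intersecting system, then $$|\mathcal{F}|\le\sum_{i=0}^{2s-1}\binom{n}{i}.$$
   Context: $L\subseteq\{0,\ldots,q-1\}$ is an interval in the modulo $q$ sense of size $s$ if $L$ is the set of residues in $\{0,\ldots,q-1\}$ of $a,a+1,\ldots,a+s-1$ for some integer $a$. For $L\subseteq\{0,\ldots,q-1\}$, $\mathcal{F}\subseteq2^{[n]}$ is $q$-modular $L$-intersecting if for all distinct $A,B\in\mathcal{F}$, $|A\cap B|\equiv\ell\pmod q$ for some $\ell\in L$, and $q$-modular $L$-avoiding if for every $A\in\mathcal{F}$, $|A|\not\equiv\ell\pmod q$ for all $\ell\in L$. *)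

(* Defs.v *)
From mathcomp Require Import all_boot.
Set Implicit Arguments. Unset Strict Implicit. Unset Printing Implicit Defensive.

Definition mod_interval (q s : nat) (L : {set 'I_q}) : Prop :=
  exists a : nat, forall x : 'I_q,
    (x \in L) = has (fun j => (a + j) %% q == nat_of_ord x) (iota 0 s).

Definition mod_L_intersecting (n q : nat) (L : {set 'I_q}) (F : {set {set 'I_n}}) : Prop :=
  forall A B, A \in F -> B \in F -> A != B ->
    exists2 l : 'I_q, l \in L & #|A :&: B| = nat_of_ord l %[mod q].

Definition mod_L_avoiding (n q : nat) (L : {set 'I_q}) (F : {set {set 'I_n}}) : Prop :=
  forall A, A \in F -> forall l : 'I_q, l \in L -> #|A| <> nat_of_ord l %[mod q].

(* Main.v *)
Require Import Defs.
From mathcomp Require Import all_boot.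
From mathcomp Require Import all_algebra all_fingroup zify.
Set Implicit Arguments. Unset Strict Implicit. Unset Printing Implicit Defensive.
Import GRing.Theory.

Lemma count_block0 p y : 0 < p -> count (fun i => i %% p == y %% p) (iota 0 p) = 1.
Proof.
move=> p0.
rewrite (@eq_in_count _ _ (pred1 (y %% p))); last first.
  by move=> i; rewrite mem_iota add0n => /andP[_ ip]; rewrite /= modn_small.
by rewrite count_uniq_mem ?iota_uniq // mem_iota add0n ltn_pmod.
Qed.

Lemma count_block p y a b : 0 < p ->
  count (fun i => (a + i) %% p == y %% p) (iota b p) = 1.
Proof.
move=> p0.
have -> : count (fun i => (a + i) %% p == y %% p) (iota b p)
        = count (fun i => i %% p == y %% p) (iota (a + b) p).
  by rewrite iotaDl count_map.
elim: (a + b) => [|c IH]; first exact: count_block0.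
case: p p0 IH => [//|p'] _ IH.
have E1 : iota c.+1 p'.+1 = iota c.+1 p' ++ [:: c.+1 + p'].
  by rewrite -[p'.+1]addn1 iotaD.
move: IH; rewrite E1 /= count_cat /= addn0 => IH; rewrite -IH addnC.
congr (_ + _); congr (nat_of_bool _).
by rewrite addSnnS modnDr.
Qed.

Lemma count_blocks p y a k : 0 < p ->
  count (fun i => (a + i) %% p == y %% p) (iota 0 (k * p)) = k.
Proof.
move=> p0; elim: k => [//|k IH].
by rewrite mulSnr iotaD count_cat IH add0n count_block // addn1.
Qed.

Lemma count_short p y a b l : 0 < p -> l <= p ->
  count (fun i => (a + i) %% p == y %% p) (iota b l) <= 1.
Proof.
move=> p0 lp; rewrite -(count_block y a b p0) -(subnKC lp) iotaD count_cat.
exact: leq_addr.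
Qed.

Definition kk p s := (s.-1) %/ p.
Definition ll p s := minn p s.
Definition II p s := iota 0 (kk p s * p) ++ iota (s - ll p s) (ll p s).
Definition cc p a i := p ^ 2 * a.+1 - (a + i).
Definition ff p a s u := \prod_(i <- II p s) (u + cc p a i).

Section Arith.
Variables (p a s : nat).
Hypothesis p_pr : prime p.
Hypothesis s1 : 1 <= s.

Let p0 : 0 < p. Proof. exact: prime_gt0. Qed.

Let kfacts : s.-1 = kk p s * p + s.-1 %% p /\ s.-1 %% p < p.
Proof. by split; [apply: divn_eq | apply: ltn_pmod]. Qed.

Lemma II_mem j : j < s -> j \in II p s.
Proof.
move=> js; rewrite /II mem_cat !mem_iota /ll.
case: kfacts => E1 E2; set k := kk p s in E1 *; set X := k * p in E1 *.
case: (leqP p s) => ps.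
  apply/orP.
  case: (leqP (s - p) j) => h; [right|left]; lia.
apply/orP; right; lia.
Qed.

Lemma II_lt i : i \in II p s -> i < s.
Proof.
rewrite /II mem_cat !mem_iota /ll.
case: kfacts => E1 E2; set k := kk p s in E1 *; set X := k * p in E1 *.
case: (leqP p s) => ps.
  lia.
lia.
Qed.

Lemma II_size : size (II p s) < 2 * s.
Proof.
rewrite /II size_cat !size_iota /ll.
case: kfacts => E1 E2.
case: (leqP p s) => ps.
  set X := kk p s * p in E1 *; lia.

have -> : kk p s = 0 by rewrite /kk divn_small //; lia.
lia.
Qed.

Lemma II_count_le y : count (fun i => (a + i) %% p == y %% p) (II p s) <= (kk p s).+1.
Proof.
rewrite /II count_cat count_blocks // -addn1 leq_add2l.
apply: count_short => //; exact: geq_minl.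
Qed.

Lemma II_count_ge j y : j < s -> (a + j) %% p == y %% p ->
  (kk p s).+1 <= count (fun i => (a + i) %% p == y %% p) (II p s).
Proof.
move=> js Pj; rewrite /II count_cat count_blocks // -addn1 leq_add2l /ll.
case: (leqP p s) => ps.
  by rewrite count_block.
rewrite subnn -has_count; apply/hasP; exists j => //.
by rewrite mem_iota.
Qed.

End Arith.

Lemma sum_bool (T : Type) (r : seq T) (b : pred T) : \sum_(i <- r) (b i : nat) = count b r.
Proof. by elim: r => [|x r IH]; rewrite ?big_nil ?big_cons ?IH. Qed.

Lemma logn_prod (T : Type) p (r : seq T) (F : T -> nat) :
  (forall i, 0 < F i) -> logn p (\prod_(i <- r) F i) = \sum_(i <- r) logn p (F i).
Proof.
move=> Fp; elim: r => [|x r IH]; first by rewrite !big_nil logn1.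
by rewrite !big_cons lognM ?IH // prodn_gt0.
Qed.

Lemma dvdn_prod_exp (T : eqType) p (r : seq T) (e F : T -> nat) :
  (forall i, i \in r -> p ^ e i %| F i) ->
  p ^ (\sum_(i <- r) e i) %| \prod_(i <- r) F i.
Proof.
move=> H; rewrite big_seq [X in _ %| X]big_seq.
apply: (big_ind2 (fun x y => p ^ x %| y)) => //.
  by move=> x1 x2 y1 y2 h1 h2; rewrite expnD dvdn_mul.
Qed.

Section Val.
Variables (p a s : nat).
Hypothesis p_pr : prime p.
Hypothesis s1 : 1 <= s.
Hypothesis sq : s <= p ^ 2 - 1.

Let p0 : 0 < p. Proof. exact: prime_gt0. Qed.

Lemma cc_eq u i : i < p ^ 2 -> u + cc p a i + (a + i) = u + p ^ 2 * a.+1.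
Proof.
move=> iq; rewrite /cc -addnA subnK //.
have : a <= p ^ 2 * a by apply: leq_pmull; rewrite expn_gt0 p0.
lia.
Qed.

Lemma cc_pos i : i < p ^ 2 -> 0 < cc p a i.
Proof.
move=> iq; rewrite /cc subn_gt0.
have : a <= p ^ 2 * a by apply: leq_pmull; rewrite expn_gt0 p0.
lia.
Qed.

Lemma dvd_x d u i : i < p ^ 2 -> d %| p ^ 2 ->
  (d %| u + cc p a i) = ((a + i) %% d == u %% d).
Proof.
move=> iq dq.
have [k' Ek] : exists k', p ^ 2 * a.+1 = k' * d.
  by apply/dvdnP; apply: dvdn_mulr.
rewrite /dvdn -(mod0n d) -(eqn_modDr (a + i) _ 0) cc_eq // Ek add0n.
by rewrite [u + _]addnC modnMDl eq_sym.
Qed.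

Lemma key_on u : (exists2 j, j < s & (a + j) %% p ^ 2 == u %% p ^ 2) ->
  p ^ (kk p s).+2 %| ff p a s u.
Proof.
case=> j js Hj.
have Hjp : (a + j) %% p == u %% p.
  by rewrite -(modn_dvdm _ (dvdn_exp2l p (isT : 1 <= 2))) (eqP Hj) modn_dvdm // dvdn_exp2l.
pose e i := (((a + i) %% p == u %% p) : nat) + (i == j).
apply: (@dvdn_trans (p ^ (\sum_(i <- II p s) e i))).
  apply: dvdn_exp2l.
  rewrite big_split /= !sum_bool -addn1 leq_add //.
    exact: II_count_ge Hjp.
  by rewrite -has_count has_pred1 II_mem.
apply: dvdn_prod_exp => i iI.
have iq : i < p ^ 2 by have := II_lt p_pr s1 iI; lia.
rewrite /e; have [->|ne] := eqVneq i j.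
  by rewrite Hjp /= dvd_x //; lia.
rewrite -[_ + false]/(_ + 0) addn0; case: eqP => Pi /=; last by rewrite expn0 dvd1n.
rewrite expn1 (dvd_x _ iq) ?Pi //; exact: dvdn_exp.
Qed.

Lemma ff_pos u : 0 < ff p a s u.
Proof.
rewrite /ff big_seq; apply: (big_ind (fun x => 0 < x)) => // [x y|i iI].
  by rewrite muln_gt0 => -> ->.
by rewrite addn_gt0 cc_pos ?orbT //; have := II_lt p_pr s1 iI; lia.
Qed.

Lemma key_off u : (forall j, j < s -> (a + j) %% p ^ 2 != u %% p ^ 2) ->
  ~~ (p ^ (kk p s).+2 %| ff p a s u).
Proof.
move=> H; rewrite pfactor_dvdn ?ff_pos // -ltnNge ltnS.
have xpos : forall i, 0 < u + cc p a (if i \in II p s then i else 0).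
  move=> i; rewrite addn_gt0 cc_pos ?orbT //.
  case: ifP => iI; last by rewrite expn_gt0 p0.
  have := II_lt p_pr s1 iI; lia.
have -> : ff p a s u = \prod_(i <- II p s) (u + cc p a (if i \in II p s then i else 0)).
  by rewrite /ff big_seq [RHS]big_seq; apply: eq_bigr => i ->.
rewrite logn_prod //.
apply: (leq_trans _ (@II_count_le p a s p_pr u)).
rewrite -sum_bool big_seq [X in _ <= X]big_seq; apply: leq_sum => i iI.
rewrite iI.
have iq : i < p ^ 2 by have := II_lt p_pr s1 iI; lia.
have ltx : 0 < u + cc p a i by rewrite addn_gt0 cc_pos ?orbT.
case: eqP => Pi /=.
  rewrite leqNgt -(pfactor_dvdn _ p_pr ltx) dvd_x // H //.
  by move: (II_lt p_pr s1 iI).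
have nd : ~~ (p %| u + cc p a i).
  by rewrite (dvd_x _ iq) ?dvdn_exp //; apply/eqP.
move: nd; rewrite -{1}[p]expn1 (pfactor_dvdn 1 p_pr ltx); lia.
Qed.

End Val.
Section Exp.
Variable n : nat.
Local Open Scope ring_scope.
Implicit Types (A R Y : {set 'I_n}).

Fixpoint gam (cs : seq nat) A R : rat :=
  match cs with
  | [::] => (R == set0)%:R
  | c :: cs' => c%:R * gam cs' A R +
      \sum_(x in A) \sum_(R' : {set 'I_n}) ((x |: R') == R)%:R * gam cs' A R'
  end.

Lemma sum_pick Y R0 (g : rat) :
  \sum_(R : {set 'I_n} | R \subset Y) ((R0 == R)%:R * g) = (R0 \subset Y)%:R * g.
Proof.
case: (boolP (R0 \subset Y)) => H.
  rewrite (bigD1 R0) //= eqxx mul1r big1 ?addr0 ?mul1r // => R /andP[_ ne].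
  by rewrite eq_sym (negbTE ne) mul0r.
rewrite big1 ?mul0r // => R RY; case: eqP => [e|_]; last by rewrite mul0r.
by move: H; rewrite e RY.
Qed.

Lemma gam_cons c cs A R : gam (c :: cs) A R = c%:R * gam cs A R +
      \sum_(x in A) \sum_(R' : {set 'I_n}) ((x |: R') == R)%:R * gam cs A R'.
Proof. by []. Qed.

Lemma gam_nil A R : gam [::] A R = (R == set0)%:R.
Proof. by []. Qed.

Lemma gam_sum cs A Y :
  \sum_(R : {set 'I_n} | R \subset Y) gam cs A R = (\prod_(c <- cs) (#|A :&: Y| + c))%:R.
Proof.
elim: cs => [|c cs IH].
  rewrite (eq_bigr (fun R : {set 'I_n} => (R == set0)%:R)); last by move=> R _; rewrite gam_nil.
  rewrite big_nil; transitivity ((set0 \subset Y)%:R * (1:rat)); last by rewrite sub0set mulr1.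
  rewrite -sum_pick; by apply: eq_bigr => R _; rewrite mulr1 eq_sym.
rewrite (eq_bigr (fun R : {set 'I_n} => c%:R * gam cs A R +
      \sum_(x in A) \sum_(R' : {set 'I_n}) ((x |: R') == R)%:R * gam cs A R')); last by move=> R _; rewrite gam_cons.
rewrite big_cons natrM -IH big_split -mulr_sumr.
rewrite exchange_big.
under eq_bigr => x _ do rewrite exchange_big.
under eq_bigr => x _ do under eq_bigr => R' _ do rewrite sum_pick subUset sub1set.
have E : forall x, \sum_(R' : {set 'I_n}) (((x \in Y) && (R' \subset Y))%:R * gam cs A R')
   = (x \in Y)%:R * \sum_(R' : {set 'I_n} | R' \subset Y) gam cs A R'.
  move=> x; rewrite mulr_sumr [RHS]big_mkcond /=; apply: eq_bigr => R' _.
  by case: (x \in Y); case: (R' \subset Y); rewrite /= ?mul1r ?mul0r ?mulr0.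
rewrite (eq_bigr _ (fun x _ => E x)) -mulr_suml.
have E2 : \sum_(x in A) ((x \in Y)%:R : rat) = \sum_(x in A :&: Y) 1.
  rewrite big_mkcond [RHS]big_mkcond; apply: eq_bigr => x _.
  by rewrite in_setI; case: (x \in A); case: (x \in Y).
rewrite E2 sumr_const natrD mulrDl addrC.
by [].
Qed.

Lemma gam_deg cs A R : (size cs < #|R|)%N -> gam cs A R = 0.
Proof.
elim: cs R => [|c cs IH] R hR.
  by rewrite gam_nil; case: eqP => // e; move: hR; rewrite e cards0.
rewrite gam_cons IH ?mulr0 ?add0r; last by apply: ltn_trans hR.
apply: big1 => x _; apply: big1 => R' _.
case: eqP => [e|_]; last by rewrite mul0r.
rewrite IH ?mulr0 //.
move: hR; rewrite -e cardsU1; case: (x \in R') => /=; lia.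
Qed.

End Exp.

Lemma det_nz p m (X : 'I_m -> 'I_m -> nat) E : prime p ->
  (forall i, 0 < X i i) -> (forall i, ~~ (p ^ E.+1 %| X i i)) ->
  (forall i j, i != j -> p ^ E.+1 %| X i j) ->
  (\det (\matrix_(i, j) ((X i j)%:R : int)) != 0)%R.
Proof.
move=> p_pr Xpos Xnd Xoff.
set V := \sum_i logn p (X i i).
have lognE i : logn p (X i i) <= E.
  by move: (Xnd i); rewrite pfactor_dvdn // -ltnNge ltnS.
have Hdiag : ~~ (p ^ V.+1 %| \prod_i X i i).
  rewrite pfactor_dvdn ?prodn_gt0 // logn_prod // /V ltnn //.
have Hoff : forall s : 'S_m, s != 1%g -> p ^ V.+1 %| \prod_i X i (s i).
  move=> s s1.
  have [i0 hi0] : exists i, s i != i.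
    apply/existsP; move: s1; apply: contraR; rewrite negb_exists => /forallP H.
    by apply/eqP/permP => i; rewrite perm1; move: (H i); rewrite negbK => /eqP.
  pose e i := logn p (X i i) + (s i != i).
  apply: (@dvdn_trans (p ^ (\sum_i e i))).
    apply: dvdn_exp2l; rewrite big_split /= -/V -addn1 leq_add2l.
    by rewrite (bigD1 i0) //= hi0.
  apply: dvdn_prod_exp => i _; rewrite /e.
  case: eqP => [->|/eqP ne]; first by rewrite addn0 pfactor_dvdnn.
  apply: dvdn_trans (Xoff _ _ _); last by rewrite eq_sym.
  by apply: dvdn_exp2l; rewrite addn1 ltnS.
apply/negP => /eqP H0.
move: H0; rewrite /determinant (bigD1 1%g) //= odd_perm1 expr0 mul1r.
under eq_bigr do rewrite mxE perm1.
rewrite -natr_prod => H0.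
have Hrest : ((\sum_(s : 'S_m | s != 1%g)
    (-1) ^+ s * \prod_i (\matrix_(i, j) ((X i j)%:R : int)) i (s i)) \in dvdz (Posz (p ^ V.+1)))%R.
  apply: rpred_sum => s s1; apply: dvdz_mull.
  under eq_bigr do rewrite mxE.
  by rewrite -natr_prod dvdzE natz !absz_nat Hoff.
move/eqP: H0; rewrite addr_eq0 => /eqP H0.
have : (((\prod_(i < m) X i i)%:R : int) \in dvdz (Posz (p ^ V.+1)))%R.
  by rewrite H0 rpredN.
by rewrite dvdzE natz !absz_nat (negbTE Hdiag).
Qed.

Lemma card_small n k :
  #|[set R : {set 'I_n} | #|R| < k]| = \sum_(0 <= i < k) 'C(n, i).
Proof.
elim: k => [|k IH].
  by rewrite big_geq // -sum1dep_card big_pred0.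
rewrite big_nat_recr //= -IH.
have -> : 'C(n, k) = #|[set R : {set 'I_n} | #|R| == k]| by rewrite card_draws card_ord.
rewrite -!sum1dep_card.
rewrite [\sum_(x | _ < k.+1) 1](bigID (fun R : {set 'I_n} => #|R| < k)) /=.
congr (_ + _); apply: eq_bigl => R.
  by case: (ltnP #|R| k) => h; rewrite ?andbT ?andbF // ltnS ltnW.
by rewrite ltnS -leqNgt -eqn_leq.
Qed.

Theorem mainTheorem16 (p n s : nat) (L : {set 'I_(p ^ 2)}) (F : {set {set 'I_n}}) :
  prime p -> 1 <= s <= p ^ 2 - 1 -> mod_interval s L ->
  mod_L_avoiding L F -> mod_L_intersecting L F ->
  #|F| <= \sum_(0 <= i < 2 * s) 'C(n, i).
Proof.
move=> p_pr /andP[s1 sq] [a Ha] Hav Hint.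
have q0 : 0 < p ^ 2 by rewrite expn_gt0 prime_gt0.
pose cs := [seq cc p a i | i <- II p s].
have ffE u : ff p a s u = \prod_(c <- cs) (u + c) by rewrite /ff big_map.
pose av (i : 'I_#|F|) : {set 'I_n} := enum_val i.
pose X i j := ff p a s #|av i :&: av j|.
have inL u : (exists2 j, j < s & (a + j) %% p ^ 2 == u %% p ^ 2) <->
    (Ordinal (ltn_pmod u q0) \in L).
  rewrite Ha; split.
    by case=> j js hj; apply/hasP; exists j; rewrite ?mem_iota.
  by case/hasP => j; rewrite mem_iota => /andP[_ js] hj; exists j.
have Xnd : forall i, ~~ (p ^ (kk p s).+2 %| X i i).
  move=> i; rewrite /X setIid; apply: key_off => // j js; apply/negP => hj.
  have : Ordinal (ltn_pmod #|av i| q0) \in L by apply/inL; exists j.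
  move/(Hav _ (enum_valP i)); apply; by rewrite /= modn_mod.
have Xoff : forall i j, i != j -> p ^ (kk p s).+2 %| X i j.
  move=> i j ij; apply: key_on => //.
  have [l lL hl] := Hint _ _ (enum_valP i) (enum_valP j)
      (contra (fun e => introT eqP (enum_val_inj (eqP e))) ij).
  apply/inL; suff -> : Ordinal (ltn_pmod #|av i :&: av j| q0) = l by [].
  by apply: val_inj => /=; rewrite hl modn_small.
have Hdet := @det_nz p _ X _ p_pr (fun i => ff_pos a p_pr s1 sq _) Xnd Xoff.
pose Sm := [set R : {set 'I_n} | #|R| < 2 * s].
pose bv (k : 'I_#|Sm|) : {set 'I_n} := enum_val k.
pose Mz := (\matrix_(i, j) ((X i j)%:R : int))%R.
pose G : 'M[rat]_(#|F|, #|Sm|) := (\matrix_(i, k) gam cs (av i) (bv k))%R.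
pose H : 'M[rat]_(#|Sm|, #|F|) := (\matrix_(k, j) ((bv k \subset av j)%:R))%R.
have EM : map_mx intr Mz = (G *m H)%R.
  apply/matrixP => i j; rewrite !mxE.
  transitivity ((X i j)%:R : rat)%R; first by rewrite natz.
  rewrite (eq_bigr (fun k => gam cs (av i) (bv k) * (bv k \subset av j)%:R)%R); last first.
    by move=> k _; rewrite !mxE.
  rewrite -(big_enum_val (fun R : {set 'I_n} => gam cs (av i) R * (R \subset av j)%:R)%R).
  rewrite big_mkcond /=.
  rewrite (eq_bigr (fun R : {set 'I_n} => gam cs (av i) R * (R \subset av j)%:R)%R); last first.
    move=> R _; rewrite inE; case: ltnP => h //.
    rewrite gam_deg ?mul0r //.
    by rewrite size_map; apply: leq_trans h; apply: II_size.
  rewrite (eq_bigr (fun R : {set 'I_n} => if R \subset av j then gam cs (av i) R else 0)%R); last first.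
    by move=> R _; case: (R \subset av j); rewrite ?mulr1 ?mulr0.
  by rewrite -big_mkcond gam_sum /X ffE.
have rk : \rank (map_mx (intr : int -> rat) Mz) = #|F|.
  apply: mxrank_unit; rewrite unitmxE unitfE det_map_mx intr_eq0; exact: Hdet.
rewrite -card_small -rk EM; exact: leq_trans (mxrankM_maxl G H) (rank_leq_col G).
Qed.
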